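(* Let $G_1,G_2$ be connected infinite graphs with vertex degrees uniformly bounded, which are quasi-isometric. If $G_2$ is weighted hyperfinite, then so is $G_1$.
   Context: $G_1$ and $G_2$ are quasi-isometric if there is a map $\iota:V(G_1)\to V(G_2)$ and a constant $c>0$ such that $c^{-1}d_{G_1}(x,y)-c\le d_{G_2}(\iota(x),\iota(y))\le c\,d_{G_1}(x,y)+c$ for all $x,y\in V(G_1)$, and every $z\in V(G_2)$ is within $d_{G_2}$-distance $c$ of $\iota(V(G_1))$; here $d_{G_i}$ are the graph (shortest path) metrics. A connected infinite bounded-degree graph $G$ is weighted hyperfinite if for every $\epsilon>0$ there is $K_\epsilon>0$ such that for every finite induced subgraph $L\subseteq G$ and every $w:V(L)\to[0,\infty)$ there is $M\subseteq V(L)$ with $\sum_{x\in M}w(x)\le\epsilon\sum_{x\in V(L)}w(x)$ such that every connected component of $L$ with $M$ deleted has at most $K_\epsilon$ vertices. *)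

(* Defs.v *)
From Stdlib Require Import Reals List Relations.
Import ListNotations.
Open Scope R_scope.

Definition is_graph {V : Type} (adj : V -> V -> Prop) : Prop :=
  (forall x y, adj x y -> adj y x) /\ (forall x, ~ adj x x).

Inductive walk {V : Type} (adj : V -> V -> Prop) : nat -> V -> V -> Prop :=
| walk_nil : forall x, walk adj 0 x x
| walk_cons : forall n x y z, adj x y -> walk adj n y z -> walk adj (S n) x z.

Definition is_dist {V : Type} (adj : V -> V -> Prop) (x y : V) (n : nat) : Prop :=
  walk adj n x y /\ (forall k, walk adj k x y -> (n <= k)%nat).

Definition connected {V : Type} (adj : V -> V -> Prop) : Prop :=
  forall x y : V, exists n, walk adj n x y.

Definition infinite_vertices (V : Type) : Prop :=
  forall l : list V, exists v, ~ In v l.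

Definition bounded_degree {V : Type} (adj : V -> V -> Prop) : Prop :=
  exists D : nat, forall v : V,
    exists l : list V, (length l <= D)%nat /\ (forall u, adj v u -> In u l).

Definition quasi_isometric {V1 V2 : Type}
  (adj1 : V1 -> V1 -> Prop) (adj2 : V2 -> V2 -> Prop) : Prop :=
  exists (iota : V1 -> V2) (c : R), 0 < c /\
    (forall (x y : V1) (n m : nat), is_dist adj1 x y n ->
        is_dist adj2 (iota x) (iota y) m ->
        / c * INR n - c <= INR m <= c * INR n + c) /\
    (forall z : V2, exists (x : V1) (k : nat),
        is_dist adj2 z (iota x) k /\ INR k <= c).

Definition sumw {V : Type} (w : V -> R) (l : list V) : R :=
  fold_right (fun x acc => w x + acc) 0 l.

Definition induced_adj {V : Type} (adj : V -> V -> Prop) (P : V -> Prop) : V -> V -> Prop :=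
  fun a b => P a /\ P b /\ adj a b.

(* A finite induced subgraph L is given by its
   (duplicate-free) finite vertex list; M is a sublist of it; the
   connected component of x in L with M deleted is the set of vertices
   reachable from x in the subgraph induced on V(L) \ M. *)
Definition weighted_hyperfinite {V : Type} (adj : V -> V -> Prop) : Prop :=
  forall eps : R, 0 < eps -> exists K : R, 0 < K /\
    forall (L : list V) (w : V -> R), NoDup L ->
      (forall x, In x L -> 0 <= w x) ->
      exists M : list V, NoDup M /\ incl M L /\
        sumw w M <= eps * sumw w L /\
        (forall x, In x L -> ~ In x M ->
           forall C : list V, NoDup C ->
             (forall y, In y C ->
                 clos_refl_trans V
                   (induced_adj adj (fun v => In v L /\ ~ In v M)) x y) ->
             INR (length C) <= K).

(* Main.v *)
Require Import Defs.
From Stdlib Require Import Reals List Relations Lra Lia Classical ClassicalEpsilon ZArith.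
Import ListNotations.
Open Scope R_scope.

Definition dec (P:Prop) : bool := if excluded_middle_informative P then true else false.
Lemma decT (P:Prop) : dec P = true <-> P.
Proof. unfold dec; destruct (excluded_middle_informative P); split; intros; auto; discriminate. Qed.
Definition eqdec {A:Type} : forall x y : A, {x=y}+{x<>y} := fun x y => excluded_middle_informative (x=y).

Lemma nat_unbounded (r : R) : exists n : nat, r <= INR n.
Proof.
  destruct (archimed r) as [H _].
  exists (Z.to_nat (up r)).
  destruct (Z_le_gt_dec 0 (up r)) as [Hz|Hz].
  - rewrite INR_IZR_INZ, Z2Nat.id by lia. lra.
  - apply Z.gt_lt in Hz. apply IZR_lt in Hz. pose proof (pos_INR (Z.to_nat (up r))). lra.
Qed.

Lemma walk_snoc {V} (adj : V -> V -> Prop) : forall n x z, walk adj (S n) x z -> exists y, walk adj n x y /\ adj y z.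
Proof.
  induction n; intros x z H.
  - inversion H as [|? ? y ? Ha Hw]; subst. inversion Hw; subst. exists x; split; [constructor|auto].
  - inversion H as [|? ? y ? Ha Hw]; subst. destruct (IHn _ _ Hw) as [y' [Hw' Ha']].
    exists y'; split; auto. econstructor; eauto.
Qed.

Section Balls.
Context {V:Type} (adj : V -> V -> Prop) (nbr : V -> list V) (D:nat)
  (Hnbr: forall v u, adj v u -> In u (nbr v)) (Hlen: forall v, (length (nbr v) <= D)%nat).

Fixpoint ball (x:V) (r:nat) : list V :=
  match r with 0 => [x] | S r => ball x r ++ flat_map nbr (ball x r) end.

Lemma ball_cover : forall n x z, walk adj n x z -> In z (ball x n).
Proof.
  induction n; intros x z H.
  - inversion H; subst. simpl; auto.
  - destruct (walk_snoc adj n x z H) as [y [Hw Ha]].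
    simpl. apply in_or_app; right. apply in_flat_map. exists y; split; auto.
Qed.

Lemma ball_mono x r r' : (r <= r')%nat -> incl (ball x r) (ball x r').
Proof.
  induction 1. - apply incl_refl.
  - intros a Ha. simpl. apply in_or_app; left; auto.
Qed.

Lemma ball_cover_le n r x z : (n <= r)%nat -> walk adj n x z -> In z (ball x r).
Proof. intros Hle Hw. apply (ball_mono x n r Hle). apply ball_cover; auto. Qed.

Lemma flat_map_len (l : list V) : (length (flat_map nbr l) <= D * length l)%nat.
Proof.
  induction l; [simpl; lia|]. cbn [flat_map length]. rewrite length_app. specialize (Hlen a). lia.
Qed.

Lemma ball_len x r : (length (ball x r) <= (D+1)^r)%nat.
Proof.
  induction r; [simpl; lia|]. cbn [ball]. rewrite length_app. rewrite Nat.pow_succ_r'. pose proof (flat_map_len (ball x r)). nia.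
Qed.
End Balls.

Lemma least (P : nat -> Prop) : (exists n, P n) -> exists n, P n /\ forall k, P k -> (n <= k)%nat.
Proof.
  intros [n Hn]. revert Hn. induction n as [n IH] using lt_wf_ind. intros Hn.
  destruct (classic (exists k, (k < n)%nat /\ P k)) as [[k [Hk Pk]]|H].
  - apply (IH k Hk Pk).
  - exists n; split; auto. intros k Pk. destruct (Nat.le_gt_cases n k); auto.
    exfalso; apply H; eauto.
Qed.

Lemma exists_dist {V} (adj : V -> V -> Prop) : connected adj -> forall x y, exists n, is_dist adj x y n.
Proof. intros Hc x y. apply least. apply Hc. Qed.

Lemma is_dist_adj {V} (adj : V -> V -> Prop) x y : is_graph adj -> adj x y -> is_dist adj x y 1.
Proof.
  intros [_ Hirr] H. split.
  - econstructor; eauto. constructor.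
  - intros k Hk. destruct k; [|lia]. inversion Hk; subst. exfalso; eapply Hirr; eauto.
Qed.

Lemma is_dist_refl {V} (adj : V -> V -> Prop) x : is_dist adj x x 0.
Proof. split; [constructor| intros; lia]. Qed.

Lemma walk_induced {V} (adj : V -> V -> Prop) (Q : V -> Prop) : forall n u v, walk adj n u v ->
  (forall z j, (j <= n)%nat -> walk adj j u z -> Q z) -> clos_refl_trans V (induced_adj adj Q) u v.
Proof.
  induction 1; intros hQ.
  - apply rt_refl.
  - assert (Qx : Q x) by (apply (hQ x 0%nat); [lia|constructor]).
    assert (Qy : Q y) by (apply (hQ y 1%nat); [lia|econstructor; eauto; constructor]).
    apply rt_trans with y.
    + apply rt_step. repeat split; auto.
    + apply IHwalk. intros z' j Hj Hw. apply (hQ z' (S j)); [lia|econstructor; eauto].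
Qed.

Lemma sumw_plus {A} (f g : A -> R) l : sumw (fun x => f x + g x) l = sumw f l + sumw g l.
Proof. induction l; simpl; [ring| rewrite IHl; ring]. Qed.
Lemma sumw_zero {A} (l : list A) : sumw (fun _ => 0) l = 0.
Proof. induction l; simpl; [ring| rewrite IHl; ring]. Qed.
Lemma sumw_filter {A} (w : A -> R) p l : sumw w (filter p l) = sumw (fun x => if p x then w x else 0) l.
Proof. induction l; simpl; auto. destruct (p a); simpl; rewrite IHl; ring. Qed.
Lemma sumw_ext {A} (f g : A -> R) l : (forall x, In x l -> f x = g x) -> sumw f l = sumw g l.
Proof. induction l; simpl; intros H; auto. rewrite H, IHl; auto. Qed.
Lemma sumw_le {A} (f g : A -> R) l : (forall x, In x l -> f x <= g x) -> sumw f l <= sumw g l.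
Proof. induction l; simpl; intros H; [lra|]. specialize (IHl (fun x h => H x (or_intror h))). specialize (H a (or_introl eq_refl)). lra. Qed.
Lemma sumw_nonneg {A} (f : A -> R) l : (forall x, In x l -> 0 <= f x) -> 0 <= sumw f l.
Proof. intros H. rewrite <- (sumw_zero l). apply sumw_le; auto. Qed.
Lemma sumw_swap {A B} (f : A -> B -> R) L L' :
  sumw (fun z => sumw (fun x => f x z) L) L' = sumw (fun x => sumw (fun z => f x z) L') L.
Proof.
  induction L'; simpl. - rewrite sumw_zero; auto.
  - rewrite IHL'. rewrite <- sumw_plus. auto.
Qed.
Lemma sumw_const_if {A} (a : R) (p : A -> bool) l : sumw (fun z => if p z then a else 0) l = a * INR (length (filter p l)).
Proof. induction l; simpl; [ring|]. destruct (p a0); cbn [filter length sumw fold_right]; fold (sumw (fun z => if p z then a else 0) l); rewrite IHl; try rewrite S_INR; ring. Qed.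

Lemma union_bound {A B} (w: A -> R) (Rel: A -> B -> bool) (L: list A) (M': list B) :
  (forall x, In x L -> 0 <= w x) ->
  sumw w (filter (fun x => existsb (Rel x) M') L) <= sumw (fun z => sumw w (filter (fun x => Rel x z) L)) M'.
Proof.
  intros Hw.
  rewrite (sumw_ext _ (fun z => sumw (fun x => if Rel x z then w x else 0) L)) by (intros; apply sumw_filter).
  rewrite sumw_swap, sumw_filter. apply sumw_le. intros x Hx. specialize (Hw x Hx).
  clear -Hw. induction M'; simpl; [lra|].
  destruct (Rel x a); simpl.
  - assert (0 <= sumw (fun z => if Rel x z then w x else 0) M') by (apply sumw_nonneg; intros; destruct (Rel x x0); lra). lra.
  - lra.
Qed.

Lemma fiber_count {A B} (f : A -> B) (N : nat) :
  (forall b (l : list A), NoDup l -> (forall y, In y l -> f y = b) -> (length l <= N)%nat) ->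
  forall Dl C, NoDup C -> (forall y, In y C -> In (f y) Dl) -> (length C <= N * length Dl)%nat.
Proof.
  intros HF. induction Dl; intros C HC Hin.
  - destruct C as [|y C]; simpl; [lia|]. exfalso; apply (Hin y); simpl; auto.
  - rewrite <- (filter_length (fun y => dec (f y = a)) C).
    assert (H1 : (length (filter (fun y => dec (f y = a)) C) <= N)%nat).
    { apply (HF a). apply NoDup_filter; auto. intros y Hy. apply filter_In in Hy. apply decT, Hy. }
    assert (H2 : (length (filter (fun y => negb (dec (f y = a))) C) <= N * length Dl)%nat).
    { apply IHDl. apply NoDup_filter; auto. intros y Hy. apply filter_In in Hy. destruct Hy as [Hy Hn].
      destruct (Hin y Hy); auto. subst. exfalso. assert (dec (f y = f y) = true) by (apply decT; auto).
      rewrite H in Hn; discriminate. }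
    simpl. lia.
Qed.

Lemma choose_nbr {V} (adj : V -> V -> Prop) : bounded_degree adj ->
  exists D (nbr : V -> list V), (forall v, (length (nbr v) <= D)%nat) /\ (forall v u, adj v u -> In u (nbr v)).
Proof.
  intros [D H]. exists D, (fun v => proj1_sig (constructive_indefinite_description _ (H v))).
  split; intros v; destruct (constructive_indefinite_description _ (H v)) as [l [H1 H2]]; simpl; auto.
Qed.

Lemma sumw_scal {A} (a : R) (f : A -> R) l : sumw (fun x => a * f x) l = a * sumw f l.
Proof. induction l; simpl; [ring|rewrite IHl; ring]. Qed.

Lemma pow_ge1 (d r : nat) : (1 <= (d+1)^r)%nat.
Proof. pose proof (Nat.pow_nonzero (d+1) r). lia. Qed.

Theorem proposition3p1 (V1 V2 : Type)
  (adj1 : V1 -> V1 -> Prop) (adj2 : V2 -> V2 -> Prop) :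
  is_graph adj1 -> connected adj1 -> infinite_vertices V1 -> bounded_degree adj1 ->
  is_graph adj2 -> connected adj2 -> infinite_vertices V2 -> bounded_degree adj2 ->
  quasi_isometric adj1 adj2 ->
  weighted_hyperfinite adj2 -> weighted_hyperfinite adj1.
Proof.
  intros G1 C1 I1 BD1 G2 C2 I2 BD2 [iota [c [Hc [Hqi Hcov]]]] WH2.
  destruct (choose_nbr adj1 BD1) as [D1 [nbr1 [Hl1 Hn1]]].
  destruct (choose_nbr adj2 BD2) as [D2 [nbr2 [Hl2 Hn2]]].
  destruct (nat_unbounded (2*c)) as [B HB].
  destruct (nat_unbounded (c*c)) as [F HF].
  assert (Hadj : forall x y, adj1 x y -> exists m, (m <= B)%nat /\ walk adj2 m (iota x) (iota y)).
  { intros x y H. destruct (exists_dist adj2 C2 (iota x) (iota y)) as [m Hm].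
    pose proof (Hqi x y 1%nat m (is_dist_adj adj1 x y G1 H) Hm) as [_ Hup].
    exists m; split; [|apply Hm]. apply INR_le. change (INR 1) with 1 in Hup. lra. }
  assert (Hfib : forall x y, iota x = iota y -> exists n, (n <= F)%nat /\ walk adj1 n x y).
  { intros x y H. destruct (exists_dist adj1 C1 x y) as [n Hn].
    assert (Hd : is_dist adj2 (iota x) (iota y) 0) by (rewrite H; apply is_dist_refl).
    pose proof (Hqi x y n 0%nat Hn Hd) as [Hlo _].
    exists n; split; [|apply Hn]. apply INR_le. change (INR 0) with 0 in Hlo.
    assert (E : INR n = c * (/c * INR n)) by (field; lra).
    assert (INR n <= c * c). { rewrite E. apply Rmult_le_compat_l; lra. }
    lra. }
  intros eps Heps.
  assert (HN2 : 0 < INR ((D2+1)^B)) by (apply lt_0_INR; pose proof (pow_ge1 D2 B); lia).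
  assert (HN1 : 0 < INR ((D1+1)^F)) by (apply lt_0_INR; pose proof (pow_ge1 D1 F); lia).
  destruct (WH2 (eps / INR ((D2+1)^B))) as [K' [HK' HWH]].
  { apply Rdiv_lt_0_compat; lra. }
  exists (INR ((D1+1)^F) * K'). split. { apply Rmult_lt_0_compat; auto. }
  intros L w HL Hw.
  set (Rel := fun x z => dec (exists j, (j <= B)%nat /\ walk adj2 j (iota x) z)).
  set (L' := nodup eqdec (flat_map (fun x => ball nbr2 (iota x) B) L)).
  set (w2 := fun z => sumw w (filter (fun x => Rel x z) L)).
  destruct (HWH L' w2) as [M' [HM'nd [HM'incl [HM'w HM'c]]]].
  { apply NoDup_nodup. }
  { intros z _. apply sumw_nonneg. intros x Hx. apply filter_In in Hx. apply Hw, Hx. }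
  set (M := filter (fun x => existsb (Rel x) M') L).
  exists M. split; [apply NoDup_filter; auto|]. split.
  { intros x Hx. apply filter_In in Hx; apply Hx. }
  split.
  - apply Rle_trans with (sumw w2 M'). { apply union_bound; auto. }
    apply Rle_trans with (eps / INR ((D2+1)^B) * sumw w2 L'); auto.
    assert (Hs : sumw w2 L' <= INR ((D2+1)^B) * sumw w L).
    { unfold w2. rewrite (sumw_ext _ (fun z => sumw (fun x => if Rel x z then w x else 0) L)) by (intros; apply sumw_filter).
      rewrite sumw_swap. rewrite <- sumw_scal. apply sumw_le. intros x Hx.
      rewrite (sumw_const_if (w x) (Rel x)).
      assert (Hlen : (length (filter (Rel x) L') <= (D2+1)^B)%nat).
      { apply Nat.le_trans with (length (ball nbr2 (iota x) B)); [|apply (ball_len nbr2 D2 Hl2)].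
        apply NoDup_incl_length. { apply NoDup_filter, NoDup_nodup. }
        intros z Hz. apply filter_In in Hz. destruct Hz as [_ Hz]. unfold Rel in Hz. apply (proj1 (decT _)) in Hz.
        destruct Hz as [j [Hj Hw']]. eapply ball_cover_le; eauto. }
      apply le_INR in Hlen. specialize (Hw x Hx). nra. }
    assert (0 <= eps / INR ((D2+1)^B)) by (apply Rlt_le, Rdiv_lt_0_compat; lra).
    apply Rle_trans with (eps / INR ((D2+1)^B) * (INR ((D2+1)^B) * sumw w L)).
    { apply Rmult_le_compat_l; auto. }
    right. field. lra.
  - intros x Hx HxM C HC Hreach.
    assert (HQ : forall a, In a L -> ~ In a M -> forall z j, (j <= B)%nat -> walk adj2 j (iota a) z -> In z L' /\ ~ In z M').
    { intros a Ha HaM z j Hj Hw'. split.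
      - unfold L'. apply nodup_In. apply in_flat_map. exists a; split; auto. eapply ball_cover_le; eauto.
      - intros HzM. apply HaM. unfold M. apply filter_In. split; auto. apply existsb_exists. exists z; split; auto. unfold Rel. apply decT. eauto. }
    assert (Hmap : forall a b, clos_refl_trans V1 (induced_adj adj1 (fun v => In v L /\ ~ In v M)) a b ->
        clos_refl_trans V2 (induced_adj adj2 (fun v => In v L' /\ ~ In v M')) (iota a) (iota b)).
    { intros a b H; induction H as [a b Hab| a | a b d _ IH1 _ IH2].
      - destruct Hab as [[Ha HaM] [[Hb HbM] Hab]]. destruct (Hadj a b Hab) as [m [Hm Hw']].
        apply (walk_induced adj2 _ m); auto. intros z j Hj Hw''. apply (HQ a Ha HaM z j); [lia|auto].
      - apply rt_refl.
      - eapply rt_trans; eauto. }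
    set (Dl := nodup eqdec (map iota C)).
    assert (HD : INR (length Dl) <= K').
    { apply (HM'c (iota x)).
      - apply (HQ x Hx HxM (iota x) 0%nat); [lia|constructor].
      - apply (HQ x Hx HxM (iota x) 0%nat); [lia|constructor].
      - apply NoDup_nodup.
      - intros z Hz. unfold Dl in Hz. apply nodup_In, in_map_iff in Hz. destruct Hz as [y [<- Hy]]. apply Hmap, Hreach, Hy. }
    assert (Hcnt : (length C <= (D1+1)^F * length Dl)%nat).
    { apply (fiber_count iota ((D1+1)^F)).
      - intros b l Hl Hf. destruct l as [|y0 l0]; [simpl; lia|].
        apply Nat.le_trans with (length (ball nbr1 y0 F)); [|apply (ball_len nbr1 D1 Hl1)].
        apply NoDup_incl_length; auto. intros y Hy.
        destruct (Hfib y0 y) as [n [Hn Hw']]. { rewrite (Hf y0), (Hf y); simpl; auto. }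
        eapply ball_cover_le; eauto.
      - auto.
      - intros y Hy. unfold Dl. apply nodup_In, in_map; auto. }
    apply le_INR in Hcnt. rewrite mult_INR in Hcnt.
    apply Rle_trans with (1 := Hcnt). apply Rmult_le_compat_l; [apply pos_INR|auto].
Qed.
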